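(* Let $\Gamma=(V,E,\ell)$ be a finite labeled simplicial graph with all labels even whose Artin group $A_\Gamma$ is of FC-type, let $\mathbb{K}$ be a field, and let $\chi:A_\Gamma\to\mathbb{Z}$ be a surjective, $\mathbb{K}$ non-resonant homomorphism. Fix $k$ and let $\bar X=(X_1,\dots,X_r)$ be a list of distinct simplices of $\mathcal{F}^f(\Gamma)$ with $k+2$ vertices and $\bar Y=(Y_1,\dots,Y_r)$ a list of distinct simplices with $k+1$ vertices. Let $\mathfrak{m}^\chi_{(\bar X,\bar Y)}\in\mathbb{K}[t^{\pm1}]$ be the $r\times r$ minor of $M^\chi_{k+1}(t)$ with rows/columns indexed by $\bar X,\bar Y$, and $\mathfrak{m}_{(\bar X,\bar Y)}\in\mathbb{K}$ the corresponding minor of $M_{k+1}$. Then: (i) $\mathfrak{m}^\chi_{(\bar X,\bar Y)}=\dfrac{\mathbf{p}_{\bar X}\mathbf{q}_{\bar X}}{\mathbf{p}_{\bar Y}\mathbf{q}_{\bar Y}}\,\mathfrak{m}_{(\bar X,\bar Y)}$; (ii) $\mathfrak{m}^\chi_{(\bar X,\bar Y)}\neq 0$ if and only if $(\bar X,\bar Y)$ is acyclic of order $r$; (iii) the largest $r$ for which some $r\times r$ minor $\mathfrak{m}^\chi_{(\bar X,\bar Y)}$ is nonzero is $r=\dim_{\mathbb{K}}\operatorname{im}\partial_{k+1}$.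
   Context: $\Gamma=(V,E,\ell)$: finite simplicial graph, labels $\ell(e)=2\tilde\ell(e)$, $\tilde\ell(e)\ge1$. $A_\Gamma=\langle g_v\ (v\in V)\mid (g_vg_w)^{\tilde\ell(e)}=(g_wg_v)^{\tilde\ell(e)},\ e=\{v,w\}\in E\rangle$. For a clique $X\subseteq V$, $W_X$ is the Coxeter group on $g_v$ ($v\in X$) with $g_v^2=1$, $(g_vg_w)^{\ell(\{v,w\})}=1$; FC-type means all such $W_X$ are finite. $\mathcal{F}^f(\Gamma)$ is the simplicial complex on $V$ whose simplices are cliques $X$ with $W_X$ finite (plus $\emptyset$). Fix a total order on $V$; for $X=\{x_0<\dots<x_k\}$, $X_{x_i}=X\setminus\{x_i\}$, $\langle X_{x_i}|X\rangle=(-1)^i$. The (augmented) flag chain complex $C^f_*(\Gamma)$ over $\mathbb{K}$ has basis $c_X$ of $C^f_k$ the simplices with $k+1$ vertices and $\partial_k c_X=\sum_{v\in X}\langle X_v|X\rangle c_{X_v}$; $M_{k+1}$ is the matrix of $\partial_{k+1}$ in these bases (entry $\langle Y|X\rangle$ if $Y\subset X$, $0$ otherwise). $m_v=\chi(g_v)$; for an edge $e=\{v,w\}$, $m_e=m_v+m_w$. $\chi$ is $\mathbb{K}$ non-resonant if $m_v\neq0$ for all $v\in V$ and there is no edge $e$ with $m_e=0$ and $\tilde\ell(e)\cdot1_{\mathbb{K}}=0$. Put $q_n(x)=(x^n-1)/(x-1)$. For a simplex $X$: $\mathbf{p}_X=\prod_{v\in X}(t^{m_v}-1)$, $\mathbf{q}_X=\prod_{e\subseteq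 X,\,e\in E}q_{\tilde\ell(e)}(t^{m_e})$; for a list $\bar X=(X_1,\dots,X_r)$, $\mathbf{p}_{\bar X}=\prod_i\mathbf{p}_{X_i}$, $\mathbf{q}_{\bar X}=\prod_i\mathbf{q}_{X_i}$. Equivariant complex: $C^\chi_k(\Gamma)$ is free over $\mathbb{K}[t^{\pm1}]$ with basis $\sigma^\chi_X$, $X$ simplex with $k+1$ vertices, and $\partial^\chi_k\sigma^\chi_X=\sum_{v\in X}\langle X_v|X\rangle(t^{m_v}-1)\big[\prod_{w\in X_v}q_{\tilde\ell(\{v,w\})}(t^{m_v+m_w})\big]\sigma^\chi_{X_v}$. $M^\chi_{k+1}(t)$ is the matrix of $\partial^\chi_{k+1}$ in these bases. Acyclic pairs: for $\bar X,\bar Y$ as in the claim, let $N(\bar X)$ be the subcomplex of $\mathcal{F}^f(\Gamma)$ consisting of all simplices with at most $k+1$ vertices together with the simplices in $\bar X$, and $N(\bar Y^c)$ the subcomplex of all simplices with at most $k$ vertices together with the simplices with $k+1$ vertices not in $\bar Y$. $(\bar X,\bar Y)$ is acyclic of order $r$ if $|\bar X|=|\bar Y|=r$ and the pair $(N(\bar X),N(\bar Y^c))$ is acyclic, i.e. $H_*(N(\bar X),N(\bar Y^c);\mathbb{K})=0$. *)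

(* Defs.v *)
From HB Require Import structures.
From mathcomp Require Import all_boot all_order all_algebra fraction.
From mathcomp Require Import boolp.
Set Implicit Arguments. Unset Strict Implicit. Unset Printing Implicit Defensive.
Import Order.TTheory GRing.Theory Num.Theory.
Local Open Scope ring_scope.

Notation "x %:F" := (@FracField.tofrac _ x).

(* Vertices: V = 'I_N, with the total order of the naturals.
   Graph: edge relation E (symmetric, irreflexive).
   lt v w = \tilde\ell({v,w}), the half-label; \ell(e) = 2 * lt. *)

Definition is_graph (N : nat) (E : rel 'I_N) (lt : 'I_N -> 'I_N -> nat) : Prop :=
  (forall v, ~~ E v v) /\ (forall v w, E v w = E w v) /\
  (forall v w, E v w -> lt v w = lt w v /\ (1 <= lt v w)%N).

Definition clique (N : nat) (E : rel 'I_N) (X : {set 'I_N}) : bool :=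
  [forall v in X, forall w in X, (v != w) ==> E v w].

(* The Coxeter group W_X presented as the monoid of words over X modulo the
   congruence generated by  v v = 1  and  (v w)^{\ell(v,w)} = 1  (v,w in X,
   {v,w} an edge, \ell = 2 * lt).  Since g_v^2 = 1, this monoid is the group W_X. *)
Inductive cox_eq (N : nat) (E : rel 'I_N) (lt : 'I_N -> 'I_N -> nat)
    (X : {set 'I_N}) : seq 'I_N -> seq 'I_N -> Prop :=
  | cox_refl u : cox_eq E lt X u u
  | cox_sym u u' : cox_eq E lt X u u' -> cox_eq E lt X u' u
  | cox_trans u u' u'' : cox_eq E lt X u u' -> cox_eq E lt X u' u'' ->
      cox_eq E lt X u u''
  | cox_sq a b v : v \in X -> cox_eq E lt X (a ++ [:: v; v] ++ b) (a ++ b)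
  | cox_braid a b v w : v \in X -> w \in X -> E v w ->
      cox_eq E lt X (a ++ flatten (nseq (2 * lt v w) [:: v; w]) ++ b) (a ++ b).

Definition cox_finite (N : nat) (E : rel 'I_N) (lt : 'I_N -> 'I_N -> nat)
    (X : {set 'I_N}) : Prop :=
  exists s : seq (seq 'I_N), forall u : seq 'I_N, all (fun x => x \in X) u ->
    exists2 u', u' \in s & cox_eq E lt X u u'.

Definition FC_type (N : nat) (E : rel 'I_N) (lt : 'I_N -> 'I_N -> nat) : Prop :=
  forall X : {set 'I_N}, clique E X -> cox_finite E lt X.

(* Simplices of F^f(Gamma) (including the empty simplex). *)
Definition simplex (N : nat) (E : rel 'I_N) (lt : 'I_N -> 'I_N -> nat)
    (X : {set 'I_N}) : bool :=
  clique E X && `[< cox_finite E lt X >].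

(* chi : A_Gamma -> Z is given by m v = chi(g_v); every m : V -> int defines a
   homomorphism (the relations of A_Gamma hold in the abelian group Z). *)
Definition chi_surjective (N : nat) (m : 'I_N -> int) : Prop :=
  forall z : int, exists c : 'I_N -> int, \sum_v c v * m v = z.

Definition non_resonant (K : fieldType) (N : nat) (E : rel 'I_N)
    (lt : 'I_N -> 'I_N -> nat) (m : 'I_N -> int) : Prop :=
  (forall v, m v != 0) /\
  ~ (exists v w, [/\ E v w, m v + m w = 0 & (lt v w)%:R = 0 :> K]).

(* Laurent polynomials K[t^{+-1}] are computed inside the field of rational
   functions {fraction {poly K}}; t is the indeterminate. *)
Definition tt (K : fieldType) : {fraction {poly K}} := ('X)%:F.

(* q_n(x) = (x^n - 1)/(x - 1) = 1 + x + ... + x^(n-1) (as a polynomial). *)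
Definition qn (R : nzRingType) (n : nat) (x : R) : R := \sum_(i < n) x ^+ i.

Definition removed (N : nat) (Y X : {set 'I_N}) : option 'I_N :=
  [pick v in X | Y == X :\ v].

(* <X_v | X> = (-1)^i where v = x_i, i.e. i = #{y in X | y < v} *)
Definition sgn (R : nzRingType) (N : nat) (X : {set 'I_N}) (v : 'I_N) : R :=
  (-1) ^+ #|[set y in X | (y < v)%N]|.

Definition incK (K : fieldType) (N : nat) (Y X : {set 'I_N}) : K :=
  if removed Y X is Some v then sgn K X v else 0.

(* Entry of the equivariant boundary matrix: coefficient of sigma_Y in
   d^chi sigma_X. *)
Definition incchi (K : fieldType) (N : nat) (lt : 'I_N -> 'I_N -> nat)
    (m : 'I_N -> int) (Y X : {set 'I_N}) : {fraction {poly K}} :=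
  if removed Y X is Some v then
    sgn _ X v * (tt K ^ m v - 1) *
    \prod_(w in Y) qn (lt v w) (tt K ^ (m v + m w))
  else 0.

Definition pX (K : fieldType) (N : nat) (m : 'I_N -> int) (X : {set 'I_N})
  : {fraction {poly K}} := \prod_(v in X) (tt K ^ m v - 1).

Definition qX (K : fieldType) (N : nat) (E : rel 'I_N)
    (lt : 'I_N -> 'I_N -> nat) (m : 'I_N -> int) (X : {set 'I_N})
  : {fraction {poly K}} :=
  \prod_(v in X) \prod_(w in X | (v < w)%N && E v w)
     qn (lt v w) (tt K ^ (m v + m w)).

Definition minorK (K : fieldType) (N r : nat) (Xs Ys : 'I_r -> {set 'I_N}) : K :=
  \det (\matrix_(i < r, j < r) incK K (Ys j) (Xs i)).

Definition minorchi (K : fieldType) (N : nat) (lt : 'I_N -> 'I_N -> nat)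
    (m : 'I_N -> int) (r : nat) (Xs Ys : 'I_r -> {set 'I_N})
  : {fraction {poly K}} :=
  \det (\matrix_(i < r, j < r) incchi K lt m (Ys j) (Xs i)).

(* Relative chain complex of a pair (N1, N2) of subcomplexes (N2 inside N1),
   augmented (the empty simplex is a 0-vertex cell).  cells d = simplices of
   N1 not in N2 with d vertices. *)
Definition cells (N : nat) (N1 N2 : pred {set 'I_N}) (d : nat)
  : {set {set 'I_N}} := [set X | N1 X && ~~ N2 X & #|X| == d].

(* Matrix of the boundary from d+1-vertex cells to d-vertex cells
   (row-vector convention: row = source cell, column = target cell). *)
Definition bdmx (K : fieldType) (N : nat) (N1 N2 : pred {set 'I_N}) (d : nat)
  : 'M[K]_(#|cells N1 N2 d.+1|, #|cells N1 N2 d|) :=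
  \matrix_(i, j) incK K (enum_val j) (enum_val i).

(* H_*(N1, N2; K) = 0 : every cycle is a boundary in each degree. *)
Definition acyclic_pair (K : fieldType) (N : nat) (N1 N2 : pred {set 'I_N})
  : Prop :=
  (1%:M <= bdmx K N1 N2 0)%MS /\
  (forall d, (kermx (bdmx K N1 N2 d) <= bdmx K N1 N2 d.+1)%MS).

(* With n = k+1: Xs are simplices with n+1 vertices, Ys with n vertices. *)
Definition NX (N : nat) (E : rel 'I_N) (lt : 'I_N -> 'I_N -> nat) (n r : nat)
    (Xs : 'I_r -> {set 'I_N}) : pred {set 'I_N} :=
  fun S => simplex E lt S && ((#|S| <= n)%N || [exists i, Xs i == S]).

Definition NYc (N : nat) (E : rel 'I_N) (lt : 'I_N -> 'I_N -> nat) (n r : nat)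
    (Ys : 'I_r -> {set 'I_N}) : pred {set 'I_N} :=
  fun S => simplex E lt S &&
    ((#|S| < n)%N || ((#|S| == n) && ~~ [exists i, Ys i == S])).

Definition acyclic_of_order (K : fieldType) (N : nat) (E : rel 'I_N)
    (lt : 'I_N -> 'I_N -> nat) (n r : nat) (Xs Ys : 'I_r -> {set 'I_N}) : Prop :=
  acyclic_pair K (NX E lt n Xs) (NYc E lt n Ys).

Definition good_lists (N : nat) (E : rel 'I_N) (lt : 'I_N -> 'I_N -> nat)
    (n r : nat) (Xs Ys : 'I_r -> {set 'I_N}) : Prop :=
  [/\ injective Xs, injective Ys,
      (forall i, simplex E lt (Xs i) /\ #|Xs i| = n.+1) &
      (forall i, simplex E lt (Ys i) /\ #|Ys i| = n)].

(* The flag boundary matrix M_{k+1} (k+1 = n) of C^f_*(Gamma): pair (F^f, empty). *)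
Definition Mflag (K : fieldType) (N : nat) (E : rel 'I_N)
    (lt : 'I_N -> 'I_N -> nat) (n : nat) :=
  bdmx K (simplex E lt) pred0 n.

(* Main.v *)
Require Import Defs.
From HB Require Import structures.
From mathcomp Require Import all_boot all_order all_algebra fraction.
From mathcomp Require Import ring.
Import GRing.Theory.
Local Open Scope ring_scope.


Section S.
Variable K : fieldType.
Local Notation F := {fraction {poly K}}.

Lemma tt_exp_neq1 (z : int) : z != 0 -> tt K ^ z != 1.
Proof.
have H n : (0 < n)%N -> tt K ^+ n != 1.
  move=> n0; rewrite /tt -rmorphXn -(rmorph1 (@FracField.tofrac _)) tofrac_eq.
  apply/eqP => /(congr1 (fun p : {poly K} => size p)); rewrite size_polyXn size_poly1; by case: n n0.
case: z => n; first by move=> nz; apply: H; case: n nz.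
by move=> _; rewrite /exprz /= invr_eq1; apply: H.
Qed.

Lemma qn_neq0 (l : nat) (z : int) : (1 <= l)%N -> (z == 0 -> l%:R != 0 :> K) ->
  qn l (tt K ^ z) != 0.
Proof.
move=> l1 hz; have [ez|z0] := eqVneq z 0.
  rewrite ez expr0z /qn (eq_bigr (fun _ => 1)); last by move=> i _; rewrite expr1n.
  rewrite sumr_const card_ord -[1 *+ l]/(l%:R).
  have -> : (l%:R : F) = ((l%:R : K)%:P)%:F by rewrite !rmorph_nat.
  by rewrite tofrac_eq0 polyC_eq0; apply: hz; rewrite ez.
apply/eqP => h; have := subrX1 (tt K ^ z) l; rewrite /qn in h; rewrite h mulr0.
move/eqP; rewrite subr_eq0; apply/negP.
have -> : (tt K ^ z) ^+ l = tt K ^ (z * l%:Z) by exact: (exprz_exp (tt K) z l).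
apply: tt_exp_neq1; rewrite mulf_eq0 negb_or z0 /=; by clear hz h; case: l l1.
Qed.

Lemma ttm1_neq0 (z : int) : z != 0 -> tt K ^ z - 1 != 0.
Proof. by move=> /tt_exp_neq1; rewrite subr_eq0. Qed.
End S.


Section S2.
Variables (K : fieldType) (N : nat) (E : rel 'I_N) (lt : 'I_N -> 'I_N -> nat)
  (m : 'I_N -> int).
Hypothesis HG : is_graph E lt.
Hypothesis HR : non_resonant K E lt m.
Local Notation F := {fraction {poly K}}.
Definition phi : K -> F := (@FracField.tofrac _) \o polyC.
Definition gg (a b : 'I_N) : F := qn (lt a b) (tt K ^ (m a + m b)).
Definition cc (X : {set 'I_N}) : F := pX K m X * qX K E lt m X.

Lemma gg_neq0 a b : E a b -> gg a b != 0.
Proof.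
move=> eab; case: HG => _ [_ H3]; case: HR => _ H2.
apply: qn_neq0; first by case: (H3 _ _ eab).
move=> /eqP s0; apply/negP => /eqP l0; apply: H2; exists a, b; split => //.
Qed.

Lemma cc_neq0 X : cc X != 0.
Proof.
rewrite /cc mulf_neq0 //; first by apply/prodf_neq0 => v _; apply: ttm1_neq0; case: HR.
apply/prodf_neq0 => a _; apply/prodf_neq0 => b /andP[_ /andP[_ eab]].
exact: gg_neq0.
Qed.

Lemma cc_split (X : {set 'I_N}) (v : 'I_N) : v \in X -> clique E X ->
  cc X = (tt K ^ m v - 1) * \prod_(w in X :\ v) gg v w * cc (X :\ v).
Proof.
move=> vX cX; rewrite /cc /pX /qX (big_setD1 v vX) /=.
have HX : forall a : 'I_N, \prod_(b in X | (a < b)%N && E a b) gg a b =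
   (if (a < v)%N && E a v then gg a v else 1) *
   \prod_(b in X :\ v | (a < b)%N && E a b) gg a b.
  move=> a; rewrite big_mkcondr (big_setD1 v vX) /= [in RHS]big_mkcondr /=.
  by [].
rewrite /gg in HX *.
rewrite (big_setD1 v vX) /= (eq_bigr _ (fun a _ => HX a)) big_split /= HX ltnn /= mul1r.
have hG : \prod_(b in X :\ v | (v < b)%N && E v b) qn (lt v b) (tt K ^ (m v + m b)) *
   \prod_(a in X :\ v) (if (a < v)%N && E a v then qn (lt a v) (tt K ^ (m a + m v)) else 1)
   = \prod_(w in X :\ v) qn (lt v w) (tt K ^ (m v + m w)).
  rewrite big_mkcondr -big_split /=; apply: eq_bigr => w /setD1P [wv wX].
  have evw : E v w by move/forallP: cX => /(_ v) /implyP /(_ vX) /forallP /(_ w) /implyP /(_ wX) /implyP; apply; rewrite eq_sym.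
  case: HG => _ [Hs H3]; have ewv : E w v by rewrite Hs.
  rewrite evw ewv !andbT; case: (ltngtP v w) => h.
  - by rewrite mulr1.
  - by rewrite mul1r (proj1 (H3 _ _ ewv)) addrC.
  - by move: wv; rewrite (val_inj h) eqxx.
rewrite -hG; ring.
Qed.

Lemma incchi_eq (X Y : {set 'I_N}) : clique E X ->
  incchi K lt m Y X = cc X / cc Y * phi (incK K Y X).
Proof.
move=> cX; rewrite /incchi /incK /removed; case: pickP => [v /andP[vX /eqP ->]|_];
  last by rewrite /phi /= rmorph0 mulr0.
rewrite (cc_split _ _ vX cX) /phi /sgn /= !rmorphXn !rmorphN !rmorph1 /gg.
have := cc_neq0 (X :\ v); set C := cc _ => hC.
by rewrite mulfK // [RHS]mulrC mulrA.
Qed.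

Lemma det_scale (R : comNzRingType) r (a b : 'I_r -> R) (M : 'M[R]_r) :
  \det (\matrix_(i, j) (a i * b j * M i j)) =
  (\prod_i a i) * (\prod_i b i) * \det M.
Proof.
have -> : \matrix_(i, j) (a i * b j * M i j) =
  diag_mx (\row_i a i) *m M *m diag_mx (\row_i b i).
  by apply/matrixP => i j; rewrite mul_mx_diag mul_diag_mx !mxE; ring.
by rewrite !det_mulmx !det_diag; under eq_bigr do rewrite mxE;
  under [X in _ * _ * X = _]eq_bigr do rewrite mxE; ring.
Qed.

Lemma minor_eq r (Xs Ys : 'I_r -> {set 'I_N}) : (forall i, clique E (Xs i)) ->
  minorchi K lt m Xs Ys =
    (\prod_(i < r) cc (Xs i)) / (\prod_(i < r) cc (Ys i)) *
    ((minorK K Xs Ys)%:P)%:F.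
Proof.
move=> cX; rewrite /minorchi.
have -> : \matrix_(i, j) incchi K lt m (Ys j) (Xs i) =
  \matrix_(i, j) (cc (Xs i) * (cc (Ys j))^-1 *
     (map_mx phi (\matrix_(i, j) incK K (Ys j) (Xs i))) i j).
  by apply/matrixP => i j; rewrite !mxE incchi_eq.
rewrite det_scale prodfV; congr (_ * _).
rewrite /phi /minorK. 
by rewrite (det_map_mx ((@FracField.tofrac _) \o polyC)).
Qed.
End S2.

Set Implicit Arguments. Unset Strict Implicit.


Section Mx.
Variable K : fieldType.

Lemma mx_q0 p q (A : 'M[K]_(p, q)) : q = 0%N -> A = 0.
Proof. move=> q0; subst q; apply/eqP; rewrite -mxrank_eq0 -leqn0; exact: rank_leq_col. Qed.
Lemma mx_p0 p q (A : 'M[K]_(p, q)) : p = 0%N -> A = 0.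
Proof. move=> p0; subst p; apply/eqP; rewrite -mxrank_eq0 -leqn0; exact: rank_leq_row. Qed.
Lemma sub_p0 p q r (A : 'M[K]_(p, q)) (B : 'M[K]_(r, q)) : p = 0%N -> (A <= B)%MS.
Proof. by move=> /(mx_p0 A) ->; rewrite sub0mx. Qed.
Lemma full_q0 p q (A : 'M[K]_(p, q)) : q = 0%N -> row_full A.
Proof. move=> q0; subst q; rewrite /row_full -leqn0; exact: rank_leq_col. Qed.

Lemma acyc_iff N (N1 N2 : pred {set 'I_N}) n :
  (forall d, d != n -> d != n.+1 -> #|cells N1 N2 d| = 0%N) ->
  acyclic_pair K N1 N2 <-> row_free (bdmx K N1 N2 n) && row_full (bdmx K N1 N2 n).
Proof.
move=> hc; split.
  case=> H0 Hd; apply/andP; split.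
    have := Hd n; rewrite (mx_p0 (bdmx K N1 N2 n.+1)); last first.
      by apply: hc; rewrite ?gtn_eqF // ltnW.
    by move/submx0null/eqP; rewrite kermx_eq0.
  case: n hc Hd H0 => [|d] hc Hd H0; first by rewrite -sub1mx.
  have := Hd d; rewrite (mx_q0 (bdmx K N1 N2 d)); last first.
    by apply: hc; rewrite ?ltn_eqF // ltnW.
  by rewrite kermx0 sub1mx.
case/andP => hfree hfull.
have hfull' : forall d', d' = n -> row_full (bdmx K N1 N2 d') by move=> d' ->.
have hfree' : forall d', d' = n -> row_free (bdmx K N1 N2 d') by move=> d' ->.
split.
  have [e|ne] := eqVneq 0%N n; first by rewrite sub1mx; apply: hfull'.
  by rewrite sub1mx; apply: full_q0; apply: hc; rewrite // eq_sym.
move=> d.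
have [e|ne] := eqVneq d.+1 n.
  rewrite (mx_q0 (bdmx K N1 N2 d)); last by apply: hc; rewrite -?e ?ltn_eqF.
  by rewrite kermx0 sub1mx; apply: hfull'.
have [e'|ne'] := eqVneq d n.
  move: (hfree' d e'); rewrite -kermx_eq0 => /eqP ->; exact: sub0mx.
by apply: sub_p0; apply: hc.
Qed.

Lemma rk_mxsub p q p' q' (f : 'I_p' -> 'I_p) (g : 'I_q' -> 'I_q) (A : 'M[K]_(p, q)) :
  (\rank (mxsub f g A) <= \rank A)%N.
Proof.
rewrite mxsubrc rowsubE; apply: leq_trans (mxrankM_maxr _ _) _.
rewrite -mxrank_tr trmx_mxsub -[X in (_ <= X)%N]mxrank_tr.
by rewrite rowsubE; apply: mxrankM_maxr.
Qed.

Lemma rk_rowsub_eq p p' q (f : 'I_p' -> 'I_p) (A : 'M[K]_(p, q)) :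
  injective f -> (p <= p')%N -> \rank (rowsub f A) = \rank A.
Proof.
move=> fi le; have := @eqmx_rowsub _ _ _ _ _ f f id A fi le (fun _ => erefl).
by move=> h; rewrite h mxsub_id.
Qed.

Lemma rk_mxsub_eq p q p' q' (f : 'I_p' -> 'I_p) (g : 'I_q' -> 'I_q) (A : 'M[K]_(p, q)) :
  injective f -> injective g -> (p <= p')%N -> (q <= q')%N ->
  \rank (mxsub f g A) = \rank A.
Proof.
move=> fi gi lp lq; rewrite mxsubcr -mxrank_tr trmx_mxsub rk_rowsub_eq //.
by rewrite mxrank_tr rk_rowsub_eq.
Qed.
End Mx.


Section Cells.
Variables (N : nat) (E : rel 'I_N) (lt : 'I_N -> 'I_N -> nat) (n r : nat)
  (Xs Ys : 'I_r -> {set 'I_N}).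
Hypothesis HL : good_lists E lt n Xs Ys.

Lemma cells_NX d S : (S \in cells (NX E lt n Xs) (NYc E lt n Ys) d) =
  ((d == n.+1) && [exists i, Xs i == S]) || ((d == n) && [exists i, Ys i == S]).
Proof.
case: HL => iX iY hX hY.
rewrite /cells inE /NX /NYc.
case: existsP => [[i /eqP <-]|nX].
  have [sX cX] := hX i; rewrite sX cX.
  have h1 : (n.+1 < n)%N = false by rewrite ltnNge ltnW.
  rewrite orbT h1 (gtn_eqF (ltnSn n)) /= andbT eq_sym; case: eqP => //= _.
  apply/esym/negP => /andP [_ /existsP [j /eqP hj]].
  by have [_] := hY j; rewrite hj cX => /eqP; rewrite (gtn_eqF (ltnSn n)).
case: existsP => [[i /eqP <-]|nY].
  have [-> ->] := hY i; rewrite leqnn ltnn /= eqxx /=.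
  by rewrite andbF andbT eq_sym.
rewrite !andbF /= orbF andbT; case: (simplex E lt S) => //=.
by rewrite orbC -leq_eqVlt andbN.
Qed.

Local Notation N1 := (NX E lt n Xs).
Local Notation N2 := (NYc E lt n Ys).

Lemma card_cX : #|cells N1 N2 n.+1| = r.
Proof.
case: (HL) => iX _ _ _.
have -> : cells N1 N2 n.+1 = [set Xs i | i : 'I_r].
  apply/setP => S; rewrite cells_NX eqxx (gtn_eqF (ltnSn n)) /= orbF.
  by apply/existsP/imsetP => [[i /eqP <-]|[i _ ->]]; exists i.
by rewrite card_imset // card_ord.
Qed.

Lemma card_cY : #|cells N1 N2 n| = r.
Proof.
case: (HL) => _ iY _ _.
have -> : cells N1 N2 n = [set Ys i | i : 'I_r].
  apply/setP => S; rewrite cells_NX eqxx (ltn_eqF (ltnSn n)) /=.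
  by apply/existsP/imsetP => [[i /eqP <-]|[i _ ->]]; exists i.
by rewrite card_imset // card_ord.
Qed.

Lemma card_c0 d : d != n -> d != n.+1 -> #|cells N1 N2 d| = 0%N.
Proof.
move=> h1 h2; apply: eq_card0 => S.
by rewrite cells_NX (negbTE h1) (negbTE h2).
Qed.

Lemma memX i : Xs i \in cells N1 N2 n.+1.
Proof. by rewrite cells_NX eqxx; apply/orP; left; apply/existsP; exists i. Qed.
Lemma memY i : Ys i \in cells N1 N2 n.
Proof. by rewrite cells_NX eqxx orbC; apply/orP; left; apply/existsP; exists i. Qed.

Lemma ii_rank (K : fieldType) : acyclic_of_order K E lt n Xs Ys <->
  \rank (\matrix_(i, j) incK K (Ys j) (Xs i)) = r.
Proof.
case: (HL) => iX iY _ _.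
rewrite /acyclic_of_order (acyc_iff K (n := n)); last by move=> d; apply: card_c0.
pose fX i := enum_rank_in (memX i) (Xs i).
pose fY i := enum_rank_in (memY i) (Ys i).
have eX i : enum_val (fX i) = Xs i by rewrite /fX enum_rankK_in // memX.
have eY i : enum_val (fY i) = Ys i by rewrite /fY enum_rankK_in // memY.
have -> : \matrix_(i, j) incK K (Ys j) (Xs i) = mxsub fX fY (bdmx K N1 N2 n).
  by apply/matrixP => i j; rewrite !mxE eX eY.
rewrite rk_mxsub_eq; first last.
- by rewrite card_cY.
- by rewrite card_cX.
- by move=> i j /(congr1 enum_val); rewrite !eY => /iY.
- by move=> i j /(congr1 enum_val); rewrite !eX => /iX.
rewrite /row_free /row_full; move: (\rank _) => k.
rewrite card_cX card_cY.
by split => [/andP[/eqP]|->] //; rewrite eqxx.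
Qed.
End Cells.

Lemma minor_nz_iff (K : fieldType) (N : nat) (E : rel 'I_N)
    (lt : 'I_N -> 'I_N -> nat) (m : 'I_N -> int) :
  is_graph E lt -> non_resonant K E lt m ->
  forall r (Xs Ys : 'I_r -> {set 'I_N}), (forall i, clique E (Xs i)) ->
  (minorchi K lt m Xs Ys != 0) = (\rank (\matrix_(i, j) incK K (Ys j) (Xs i)) == r).
Proof.
move=> HG HR r Xs Ys cX; rewrite (@minor_eq K N E lt m HG HR r Xs Ys cX).
have hnz : (\prod_(i < r) cc K N E lt m (Xs i)) / (\prod_(i < r) cc K N E lt m (Ys i)) != 0.
  by rewrite mulf_neq0 // ?invr_eq0; apply/prodf_neq0 => i _; apply: cc_neq0.
rewrite mulf_eq0 (negbTE hnz) /= tofrac_eq0 polyC_eq0 /minorK.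
by rewrite -unitfE -unitmxE -row_free_unit.
Qed.

Theorem proposition3p8 (K : fieldType) (N : nat) (E : rel 'I_N)
    (lt : 'I_N -> 'I_N -> nat) (m : 'I_N -> int) (n : nat) :
  is_graph E lt -> FC_type E lt ->
  chi_surjective m -> non_resonant K E lt m ->
  (forall (r : nat) (Xs Ys : 'I_r -> {set 'I_N}),
     good_lists E lt n Xs Ys ->
     [/\ minorchi K lt m Xs Ys =
           (\prod_(i < r) (pX K m (Xs i) * qX K E lt m (Xs i))) /
           (\prod_(i < r) (pX K m (Ys i) * qX K E lt m (Ys i))) *
           ((minorK K Xs Ys)%:P)%:F
       & minorchi K lt m Xs Ys != 0 <-> acyclic_of_order K E lt n Xs Ys]) /\
  (exists (Xs Ys : 'I_(\rank (Mflag K E lt n)) -> {set 'I_N}),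
     good_lists E lt n Xs Ys /\ minorchi K lt m Xs Ys != 0) /\
  (forall (r : nat) (Xs Ys : 'I_r -> {set 'I_N}),
     good_lists E lt n Xs Ys -> minorchi K lt m Xs Ys != 0 ->
     (r <= \rank (Mflag K E lt n))%N).

Proof.
move=> HG FC Hs HR.
have cXs r (Xs Ys : 'I_r -> {set 'I_N}) : good_lists E lt n Xs Ys -> forall i, clique E (Xs i).
  by case=> _ _ hX _ i; case/andP: (hX i).1.
split.
  move=> r Xs Ys HL; split.
    exact: (@minor_eq K N E lt m HG HR r Xs Ys (cXs _ _ _ HL)).
  rewrite (minor_nz_iff HG HR Ys (cXs _ _ _ HL)) (ii_rank HL K).
  by split => [/eqP|->].
have memC d (S : {set 'I_N}) : S \in cells (simplex E lt) pred0 d ->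
    simplex E lt S /\ #|S| = d.
  by rewrite inE => /andP[/andP[sS _] /eqP cS].
have memC' d (S : {set 'I_N}) : simplex E lt S -> #|S| = d ->
    S \in cells (simplex E lt) pred0 d.
  by move=> sS cS; rewrite inE sS cS eqxx.
split.
  set A := Mflag K E lt n.
  pose f := maxrankfun A; pose B := rowsub f A.
  have rkB : \rank B = \rank A by rewrite /B /f (eq_maxrowsub A).
  have fullBT : row_full B^T by rewrite /row_full mxrank_tr rkB.
  pose g := fullrankfun fullBT.
  have U := fullrowsub_unit fullBT.
  have HL : good_lists E lt n (fun i => enum_val (f i)) (fun j => enum_val (g j)).
    split.
    - by move=> i j /enum_val_inj /maxrankfun_inj.
    - by move=> i j /enum_val_inj /fullrankfun_inj.
    - by move=> i; apply: memC; apply: enum_valP.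
    - by move=> i; apply: memC; apply: enum_valP.
  exists (fun i => enum_val (f i)), (fun j => enum_val (g j)); split => //.
  rewrite (minor_nz_iff HG HR _ (cXs _ _ _ HL)).
  have -> : (\matrix_(i, j) incK K (enum_val (g j)) (enum_val (f i)))
     = (rowsub g B^T)^T.
    by apply/matrixP => i j; rewrite !mxE.
  by rewrite mxrank_tr mxrank_unit.
move=> r Xs Ys HL; rewrite (minor_nz_iff HG HR _ (cXs _ _ _ HL)) => /eqP <-.
case: (HL) => _ _ hX hY.
have mX i : Xs i \in cells (simplex E lt) pred0 n.+1 by apply: memC'; case: (hX i).
have mY i : Ys i \in cells (simplex E lt) pred0 n by apply: memC'; case: (hY i).
pose fX i := enum_rank_in (mX i) (Xs i).
pose fY i := enum_rank_in (mY i) (Ys i).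
have eX i : enum_val (fX i) = Xs i by rewrite /fX enum_rankK_in // mX.
have eY i : enum_val (fY i) = Ys i by rewrite /fY enum_rankK_in // mY.
have -> : \matrix_(i, j) incK K (Ys j) (Xs i) = mxsub fX fY (Mflag K E lt n).
  by apply/matrixP => i j; rewrite !mxE eX eY.
exact: rk_mxsub.
Qed.
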